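(* Let $\mathcal H$ be the set of pairs $(g,h)$ of Markov policies $g,h:\mathcal X\to\{0,1\}$ with $N^{(g)}(x)\ge N^{(h)}(x)$ for all $x$. Consider (C1): for every $(g,h)\in\mathcal H$ and all $x,z\in\mathcal X$, $\sum_{y}\{[\beta P_{zy}(1)-P_{xy}(1)]^+N^{(g)}(y)-[P_{xy}(1)-\beta P_{zy}(1)]^+N^{(h)}(y)\}\le(1-\beta)^2/\beta$; (C2): for every $(g,h)\in\mathcal H$ and all $x\in\mathcal X$, $\sum_{y}\{[P_{xy}(0)-P_{xy}(1)]^+N^{(g)}(y)-[P_{xy}(1)-P_{xy}(0)]^+N^{(h)}(y)\}\le(1-\beta)/\beta$. Then each of the following implies (C1): (a) $\max_{x,z\in\mathcal X}\sum_{y\in\mathcal X}[\beta P_{zy}(1)-P_{xy}(1)]^+\le(1-\beta)^2/\beta$; (b) $P_{xy}(1)=P_{zy}(1)$ for all $x,y,z\in\mathcal X$. And each of the following implies (C2): (c) $\max_{x\in\mathcal X}\sum_{y\in\mathcal X}[P_{xy}(0)-P_{xy}(1)]^+\le(1-\beta)/\beta$; (d) $\beta\le 0.5$.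
   Context: A restless bandit consists of a finite or countable state space $\mathcal X$, actions $\{0,1\}$, transition matrices $P(0),P(1)$ on $\mathcal X$ ($P_{xy}(a)$ = probability of moving from $x$ to $y$ under action $a$), and a cost function; $\beta\in(0,1)$ is a discount factor. $[u]^+=\max\{u,0\}$. For a Markov policy $g:\mathcal X\to\{0,1\}$ (with $X_{t+1}$ drawn from $P_{X_t\,\cdot}(g(X_t))$), $N^{(g)}(x)=(1-\beta)\mathbb E[\sum_{t\ge0}\beta^t g(X_t)\mid X_0=x]$. *)

(* Defs.v *)
From HB Require Import structures.
From mathcomp Require Import all_boot all_order all_algebra.
From mathcomp Require Import all_classical all_reals all_analysis.
Set Implicit Arguments. Unset Strict Implicit. Unset Printing Implicit Defensive.
Import Order.TTheory GRing.Theory Num.Theory.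
Local Open Scope classical_set_scope.
Local Open Scope ring_scope.

(* Actions {0,1} are encoded as bool: [false] = action 0, [true] = action 1.
   P a x y = P_{xy}(a).  A Markov policy is g : X -> bool. *)

Definition stochastic (R : realType) (X : countType) (Pa : X -> X -> R) :=
  (forall x y, 0 <= Pa x y) /\
  (forall x, (\esum_(y in [set: X]) (Pa x y)%:E = 1)%E).

(* t-step transition probabilities of the chain X_{t+1} ~ P_{X_t .}(g X_t):
   tdist P g t x y = Pr(X_t = y | X_0 = x). *)
Fixpoint tdist (R : realType) (X : countType) (P : bool -> X -> X -> R)
    (g : X -> bool) (t : nat) (x y : X) : \bar R :=
  match t with
  | 0 => ((x == y)%:R)%:E
  | t'.+1 => (\esum_(z in [set: X]) (tdist P g t' x z * (P (g z) z y)%:E))%E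
  end.

(* N^{(g)}(x) = (1-beta) E[ sum_t beta^t g(X_t) | X_0 = x ]
             = (1-beta) sum_t beta^t sum_y Pr(X_t = y) g(y). *)
Definition Nvisit (R : realType) (X : countType) (P : bool -> X -> X -> R)
    (beta : R) (g : X -> bool) (x : X) : \bar R :=
  ((1 - beta)%:E *
    \sum_(0 <= t <oo) ((beta ^+ t)%:E *
        \esum_(y in [set: X]) (tdist P g t x y * ((g y)%:R)%:E)))%E.

Definition posp (R : realType) (u : R) : R := Num.max u 0.

(* The (absolutely convergent) sum of
   differences is written as the difference of the two nonnegative sums. *)
Definition C1 (R : realType) (X : countType) (P : bool -> X -> X -> R) (beta : R) :=
  forall g h : X -> bool, (forall x, Nvisit P beta h x <= Nvisit P beta g x)%E ->
  forall x z : X,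
    (\esum_(y in [set: X]) ((posp (beta * P true z y - P true x y))%:E * Nvisit P beta g y)
     - \esum_(y in [set: X]) ((posp (P true x y - beta * P true z y))%:E * Nvisit P beta h y)
     <= ((1 - beta) ^+ 2 / beta)%:E)%E.

Definition C2 (R : realType) (X : countType) (P : bool -> X -> X -> R) (beta : R) :=
  forall g h : X -> bool, (forall x, Nvisit P beta h x <= Nvisit P beta g x)%E ->
  forall x : X,
    (\esum_(y in [set: X]) ((posp (P false x y - P true x y))%:E * Nvisit P beta g y)
     - \esum_(y in [set: X]) ((posp (P true x y - P false x y))%:E * Nvisit P beta h y)
     <= ((1 - beta) / beta)%:E)%E.

(* Main.v *)
Require Import Defs.
From HB Require Import structures.
From mathcomp Require Import all_boot all_order all_algebra.
From mathcomp Require Import all_classical all_reals all_analysis.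
From mathcomp Require Import lra.
Import Order.TTheory GRing.Theory Num.Theory.
Local Open Scope classical_set_scope.
Local Open Scope ring_scope.

Section Aux.
Variables (R : realType) (X : countType) (P : bool -> X -> X -> R).
Hypothesis P0 : forall a x y, 0 <= P a x y.
Hypothesis P1 : forall a x, (\esum_(y in [set: X]) (P a x y)%:E = 1)%E.

Lemma tdist_ge0 g t x y : (0 <= tdist P g t x y)%E.
Proof.
elim: t x y => [|t IH] x y /=; first by rewrite lee_fin ler0n.
by apply: esum_ge0 => z _; apply: mule_ge0 => //; rewrite lee_fin.
Qed.

Lemma finsumP_le1 a z (A : set X) : finite_set A ->
  (\sum_(y <- finmap.enum_fset (fset_set A)) (P a z y)%:E <= 1)%E.
Proof.
move=> finA; rewrite -fsbig_finite// -(P1 a z); apply: esum_ge.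
by exists A.
Qed.

Lemma tdist_le1 g t x : (\esum_(y in [set: X]) tdist P g t x y <= 1)%E.
Proof.
elim: t x => [|t IH] x /=.
  rewrite (esumID [set x]); last by move=> i _; rewrite lee_fin ler0n.
  rewrite (esum1 (D := _ `&` ~` _)); last first.
    by move=> i [_ /= /eqP]; rewrite eq_sym => /negbTE ->.
  rewrite adde0 setTI esum_set1 ?eqxx ?lee_fin ?ler0n//.
apply: ge_ereal_sup => _ [A [finA _] <-].
rewrite fsbig_finite//= -esum_sum; last first.
  by move=> i j _ _; apply: mule_ge0; rewrite ?lee_fin//; apply: tdist_ge0.
apply: le_trans (IH x); apply: le_esum => z _.
rewrite -ge0_sume_distrr; last by move=> i _; rewrite lee_fin.
rewrite -[X in (_ <= X)%E]mule1; apply: lee_wpmul2l; first exact: tdist_ge0.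
exact: finsumP_le1.
Qed.
Variable beta : R.
Hypothesis hb : 0 < beta < 1.

Lemma inner_bounds g t x :
  (0 <= \esum_(y in [set: X]) (tdist P g t x y * ((g y)%:R)%:E))%E /\
  (\esum_(y in [set: X]) (tdist P g t x y * ((g y)%:R)%:E) <= 1)%E.
Proof.
split.
  by apply: esum_ge0 => y _; apply: mule_ge0; [exact: tdist_ge0|rewrite lee_fin ler0n].
apply: le_trans (tdist_le1 g t x); apply: le_esum => y _.
rewrite -[X in (_ <= X)%E]mule1; apply: lee_wpmul2l; first exact: tdist_ge0.
by rewrite lee_fin; case: (g y).
Qed.

Lemma Nvisit_ge0 g x : (0 <= Nvisit P beta g x)%E.
Proof.
case/andP: hb => b0 b1.
rewrite /Nvisit; apply: mule_ge0; first by rewrite lee_fin subr_ge0 ltW.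
apply: nneseries_ge0 => n _ _; apply: mule_ge0; first by rewrite lee_fin exprn_ge0// ltW.
exact: (inner_bounds g n x).1.
Qed.

Lemma Nvisit_le1 g x : (Nvisit P beta g x <= 1)%E.
Proof.
case/andP: hb => b0 b1.
have h1 : 0 < 1 - beta by rewrite subr_gt0.
have ser : (\sum_(0 <= t <oo) ((beta ^+ t)%:E *
        \esum_(y in [set: X]) (tdist P g t x y * ((g y)%:R)%:E)) <= ((1 - beta)^-1)%:E)%E.
  apply: lime_le.
    apply: is_cvg_ereal_nneg_natsum => n _; apply: mule_ge0.
      by rewrite lee_fin exprn_ge0// ltW.
    exact: (inner_bounds g n x).1.
  near=> n.
  apply: (@le_trans _ _ (\sum_(0 <= t < n) (beta ^+ t)%:E)%E).
    apply: lee_sum => t _; rewrite -[X in (_ <= X)%E]mule1; apply: lee_wpmul2l.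
      by rewrite lee_fin exprn_ge0// ltW.
    exact: (inner_bounds g t x).2.
  rewrite sumEFin lee_fin.
  have := geometric_seriesE 1 (negbT (lt_eqF b1)).
  move=> /(congr1 (fun f => f n)); rewrite /series /= => E.
  rewrite (_ : \sum_(0 <= t < n) beta ^+ t = \sum_(0 <= t < n) geometric 1 beta t); last first.
    by apply: eq_bigr => t _; rewrite /geometric /= mul1r.
  by rewrite E mul1r ler_pdivrMr// mulVf ?gt_eqF// lerBlDr lerDl exprn_ge0// ltW.
rewrite /Nvisit.
apply: le_trans (lee_wpmul2l _ ser) _; first by rewrite lee_fin ltW.
by rewrite -EFinM divff// gt_eqF.
Unshelve. all: by end_near.
Qed.
End Aux.

Lemma posp_ge0 (R : realType) (u : R) : 0 <= posp u.
Proof. by rewrite /posp le_max lexx orbT. Qed.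

Lemma posp_le (R : realType) (u v : R) : u <= v -> 0 <= v -> posp u <= v.
Proof. by move=> uv v0; rewrite /posp ge_max uv v0. Qed.

Lemma posp0 (R : realType) (u : R) : u <= 0 -> posp u = 0.
Proof. by move=> u0; apply/le_anti; rewrite posp_ge0 posp_le. Qed.

Lemma key (R : realType) (X : countType) (f q : X -> R) (Ng Nh : X -> \bar R) (c : R) :
  (forall y, 0 <= f y) -> (forall y, 0 <= q y) ->
  (forall y, Ng y <= 1)%E -> (forall y, 0 <= Nh y)%E ->
  (\esum_(y in [set: X]) (f y)%:E <= c%:E)%E ->
  (\esum_(y in [set: X]) ((f y)%:E * Ng y) - \esum_(y in [set: X]) ((q y)%:E * Nh y)
     <= c%:E)%E.
Proof.
move=> f0 q0 Ng1 Nh0 hc.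
have b0 : (0 <= \esum_(y in [set: X]) ((q y)%:E * Nh y))%E.
  by apply: esum_ge0 => y _; apply: mule_ge0; rewrite ?lee_fin.
apply: le_trans (leeB (lexx _) b0) _; rewrite sube0.
apply: le_trans hc; apply: le_esum => y _.
by rewrite -[X in (_ <= X)%E]mule1; apply: lee_wpmul2l; rewrite ?lee_fin.
Qed.

Theorem proposition2 (R : realType) (X : countType) (P : bool -> X -> X -> R)
    (beta : R) :
  0 < beta < 1 ->
  stochastic (P false) -> stochastic (P true) ->
  (* (a) => (C1) *)
  ((forall x z : X,
      (\esum_(y in [set: X]) (posp (beta * P true z y - P true x y))%:E
        <= ((1 - beta) ^+ 2 / beta)%:E)%E) -> C1 P beta) /\
  (* (b) => (C1) *)
  ((forall x y z : X, P true x y = P true z y) -> C1 P beta) /\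
  (* (c) => (C2) *)
  ((forall x : X,
      (\esum_(y in [set: X]) (posp (P false x y - P true x y))%:E
        <= ((1 - beta) / beta)%:E)%E) -> C2 P beta) /\
  (* (d) => (C2) *)
  (beta <= 1 / 2 -> C2 P beta).
Proof.
move=> hb [P0f P1f] [P0t P1t].
have hb' := hb; case/andP: hb' => b0 b1.
have P0 : forall a x y, 0 <= P a x y by case.
have P1 : forall a x, (\esum_(y in [set: X]) (P a x y)%:E = 1)%E by case.
have Nle1 := @Nvisit_le1 R X P P0 P1 beta hb.
have Nge0 := @Nvisit_ge0 R X P P0 P1 beta hb.
have HA : (forall x z : X,
      (\esum_(y in [set: X]) (posp (beta * P true z y - P true x y))%:E
        <= ((1 - beta) ^+ 2 / beta)%:E)%E) -> C1 P beta.
  move=> Ha g h _ x z; apply: key;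
    by [move=> y; apply: posp_ge0 | move=> y; apply: Nle1 | move=> y; apply: Nge0 | apply: Ha | apply: Hc].
have HC : (forall x : X,
      (\esum_(y in [set: X]) (posp (P false x y - P true x y))%:E
        <= ((1 - beta) / beta)%:E)%E) -> C2 P beta.
  move=> Hc g h _ x; apply: key;
    by [move=> y; apply: posp_ge0 | move=> y; apply: Nle1 | move=> y; apply: Nge0 | apply: Ha | apply: Hc].
split; first exact: HA.
split.
  move=> Hb; apply: HA => x z.
  rewrite esum1; last first.
    move=> y _; rewrite (Hb x y z) posp0// -{2}(mul1r (P true z y)) -mulrBl.
    by rewrite mulr_le0_ge0 ?P0// subr_le0 (ltW b1).
  by rewrite lee_fin divr_ge0 ?exprn_ge0 ?subr_ge0 ?(ltW b1) ?(ltW b0).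
split; first exact: HC.
move=> bh; apply: HC => x.
apply: (@le_trans _ _ (\esum_(y in [set: X]) (P false x y)%:E)%E).
  apply: le_esum => y _; rewrite lee_fin posp_le//.
  by rewrite lerBlDr lerDl.
rewrite P1 lee_fin ler_pdivlMr// mul1r; lra.
Qed.
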